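(* Let $R$ be a complete discrete valuation ring of characteristic $p>0$ with uniformizer $\pi$, field of fractions $K$, and normalized valuation $v_K$. Let $H$ be a primitively generated $K$-Hopf algebra of rank $p^2$, $t_1,t_2$ a $K$-basis of $\mathrm{Prim}(H)$ with associated matrix $B$. Let \[\Theta=\begin{pmatrix}\pi^i&0\\ \theta&\pi^j\end{pmatrix},\qquad i,j\in\mathbb{Z},\ \theta\in K,\ v_K(\theta)\le j,\] satisfy $\Theta^{-1}B\Theta^{(p)}\in M_2(R)$. Then the Hopf order corresponding to $\Theta$ (the image in $H$ of the $R$-Hopf algebra $R[u_1,u_2]/(u_i^p-\sum_j a_{j,i}u_j)$, $u_i$ primitive, $(a_{j,i})=\Theta^{-1}B\Theta^{(p)}$, under $u_i\mapsto\sum_j\theta_{j,i}t_j$) is \[H_{i,j,\theta}=R[\pi^it_1+\theta t_2,\ \pi^jt_2]\subseteq H.\] Moreover, if $\theta'\in K$ with $v_K(\theta')\le j$ also satisfies that $\begin{pmatrix}\pi^i&0\\ \theta'&\pi^j\end{pmatrix}^{-1}B\begin{pmatrix}\pi^i&0\\ \theta'&\pi^j\end{pmatrix}^{(p)}\in M_2(R)$, then $H_{i,j,\theta}=H_{i,j,\theta'}$ if and only if $v_K(\theta-\theta')\ge j$.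
   Context: $\Theta^{(p)}$ denotes the matrix obtained by raising each entry of $\Theta=(\theta_{j,i})$ to the $p$-th power. $t$ is primitive if $\Delta(t)=t\otimes1+1\otimes t$; $\mathrm{Prim}(H)$ is the module of primitives; $H$ is primitively generated if generated as an algebra by its primitives. The associated matrix $B=(b_{j,i})$ is defined by $t_i^p=\sum_j b_{j,i}t_j$. An $R$-Hopf order in $H$ is a finitely generated projective $R$-submodule which is an $R$-Hopf algebra under the inherited operations and spans $H$ over $K$. *)

(* Defs.v *)
From HB Require Import structures.
From mathcomp Require Import all_boot all_order all_algebra.
From mathcomp Require Import all_field.
Set Implicit Arguments. Unset Strict Implicit. Unset Printing Implicit Defensive.
Import Order.TTheory GRing.Theory Num.Theory.
Local Open Scope ring_scope.

(* v : K -> int is the (normalized) valuation on K^x; its value at 0 is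
   irrelevant: v_K(0) = +oo is handled by the helpers vge / vle below.      *)
Definition discrete_valuation (K : fieldType) (v : K -> int) : Prop :=
  [/\ forall x y : K, x != 0 -> y != 0 -> v (x * y) = v x + v y,
      forall x y : K, x != 0 -> y != 0 -> x + y != 0 ->
        Order.min (v x) (v y) <= v (x + y)
    & exists x : K, x != 0 /\ v x = 1 ].

Definition vge (K : fieldType) (v : K -> int) (x : K) (n : int) : bool :=
  (x == 0) || (n <= v x).
Definition vle (K : fieldType) (v : K -> int) (x : K) (n : int) : bool :=
  (x != 0) && (v x <= n).

(* The valuation ring R = { x in K | v_K(x) >= 0 }; K is its fraction field. *)
Definition inR (K : fieldType) (v : K -> int) (x : K) : bool := vge v x 0.

Definition v_cauchy (K : fieldType) (v : K -> int) (a : nat -> K) : Prop :=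
  forall N : int, exists M : nat, forall m n : nat, (M <= m)%N -> (M <= n)%N ->
    vge v (a m - a n) N.
Definition v_converges (K : fieldType) (v : K -> int) (a : nat -> K) (l : K) : Prop :=
  forall N : int, exists M : nat, forall m : nat, (M <= m)%N -> vge v (a m - l) N.
Definition v_complete (K : fieldType) (v : K -> int) : Prop :=
  forall a : nat -> K, v_cauchy v a -> exists l : K, v_converges v a l.

Definition mx_inR (K : fieldType) (v : K -> int) (M : 'M[K]_2) : Prop :=
  forall a b : 'I_2, inR v (M a b).

Definition mx_frob (K : fieldType) (p : nat) (M : 'M[K]_2) : 'M[K]_2 :=
  map_mx (fun x => x ^+ p) M.

(* Theta = ( pi^i 0 ; theta pi^j ), rows indexed by j, columns by i, so that
   Theta j i = theta_{j,i}. *)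
Definition Theta_mx (K : fieldType) (pi : K) (i j : int) (theta : K) : 'M[K]_2 :=
  \matrix_(a < 2, b < 2)
    (if (a == 0) && (b == 0) then pi ^ i
     else if (a == 1) && (b == 0) then theta
     else if (a == 1) && (b == 1) then pi ^ j
     else 0).

(* T together with algebra maps i1, i2 : H -> T is H (x)_K H, with
   i1 x = x (x) 1 and i2 y = 1 (x) y: images commute and the products
   i1 e_a * i2 e_b (e a K-basis of H) form a K-basis of T. *)
Definition is_tensor_square (K : fieldType) (H T : falgType K)
    (i1 i2 : 'AHom(H, T)) : Prop :=
  (forall x y : H, i1 x * i2 y = i2 y * i1 x) /\
  basis_of fullv [seq i1 a * i2 b | a <- (vbasis {:H} : seq H),
                                    b <- (vbasis {:H} : seq H)].

Definition primitive (K : fieldType) (H T : falgType K)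
    (i1 i2 Delta : 'AHom(H, T)) (x : H) : Prop :=
  Delta x = i1 x + i2 x.

Definition Rgen (K : fieldType) (v : K -> int) (H : falgType K) (x y : H)
    (z : H) : Prop :=
  exists (n : nat) (c : 'I_n -> K) (a b : 'I_n -> nat),
    (forall k, inR v (c k)) /\ z = \sum_(k < n) c k *: (x ^+ a k * y ^+ b k).

(* The Hopf order corresponding to Theta: the image in H of
   R[u_1,u_2]/(u_i^p - sum_j a_{j,i} u_j) under u_i |-> sum_j theta_{j,i} t_j,
   i.e. the R-subalgebra generated by the images of u_1, u_2. *)
Definition hopf_order_of (K : fieldType) (v : K -> int) (H : falgType K)
    (t : 'I_2 -> H) (Th : 'M[K]_2) : H -> Prop :=
  Rgen v (\sum_(j < 2) Th j 0 *: t j) (\sum_(j < 2) Th j 1 *: t j).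

Definition H_ijtheta (K : fieldType) (v : K -> int) (H : falgType K)
    (t : 'I_2 -> H) (pi : K) (i j : int) (theta : K) : H -> Prop :=
  Rgen v (pi ^ i *: t 0 + theta *: t 1) (pi ^ j *: t 1).

(* Main.v *)
Require Import Defs.
From HB Require Import structures.
From mathcomp Require Import all_boot all_order all_algebra.
From mathcomp Require Import all_field.
Import Order.TTheory GRing.Theory Num.Theory.
Local Open Scope ring_scope.
Set Implicit Arguments. Unset Strict Implicit.

Lemma v1 (K : fieldType) (v : K -> int) : discrete_valuation v -> v 1 = 0.
Proof.
case=> Hm _ _; have := Hm 1 1 (oner_neq0 _) (oner_neq0 _).
rewrite mulr1 => /(congr1 (fun z => z - v 1)); rewrite subrr addrK => h.
by rewrite -h.
Qed.

Lemma vV (K : fieldType) (v : K -> int) (x : K) : discrete_valuation v ->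
  x != 0 -> v x^-1 = - v x.
Proof.
move=> Hv x0; have := v1 Hv; case: Hv => Hm _ _.
rewrite -(mulfV x0) Hm ?invr_eq0 // => /eqP; rewrite addr_eq0 => /eqP ->.
by rewrite opprK.
Qed.

Lemma vN (K : fieldType) (v : K -> int) (x : K) : discrete_valuation v ->
  x != 0 -> v (- x) = v x.
Proof.
move=> Hv x0; have := v1 Hv; have Hv' := Hv; case: Hv' => Hm _ _ h1.
have hm1 : v (-1) = 0.
  have n1 : (-1 : K) != 0 by rewrite oppr_eq0 oner_neq0.
  have := Hm (-1) (-1) n1 n1.
  rewrite mulrNN mulr1 h1 => /esym/eqP; rewrite -mulr2n -mulr_natr mulf_eq0 /=.
  by case/orP=> /eqP.
by rewrite -mulN1r Hm ?oppr_eq0 ?oner_neq0 // hm1 add0r.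
Qed.

Lemma vexpz (K : fieldType) (v : K -> int) (pi : K) (n : int) :
  discrete_valuation v -> pi != 0 -> v pi = 1 -> v (pi ^ n) = n.
Proof.
move=> Hv p0 vp.
have hn : forall m : nat, v (pi ^+ m) = m%:Z.
  elim=> [|m IH]; first by rewrite expr0 (v1 Hv).
  case: Hv => Hm _ _; rewrite exprS Hm ?expf_neq0 // IH vp.
  by rewrite -addn1 PoszD addrC.
case: n => m; first by rewrite hn.
rewrite /exprz vV ?expf_neq0 // hn NegzE //.
Qed.

Lemma inR_mul (K : fieldType) (v : K -> int) (a b : K) : discrete_valuation v ->
  inR v a -> inR v b -> inR v (a * b).
Proof.
move=> Hv; rewrite /inR /vge; case: Hv => Hm _ _.
case: (eqVneq a 0) => [->|a0]; first by rewrite mul0r eqxx.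
case: (eqVneq b 0) => [->|b0]; first by rewrite mulr0 eqxx.
rewrite /= mulf_eq0 (negbTE a0) (negbTE b0) /= Hm // => ha hb.
exact: addr_ge0.
Qed.

Lemma inR1 (K : fieldType) (v : K -> int) : discrete_valuation v -> inR v 1.
Proof. by move=> Hv; rewrite /inR /vge (v1 Hv) lexx orbT. Qed.
Lemma inR0 (K : fieldType) (v : K -> int) : inR v 0.
Proof. by rewrite /inR /vge eqxx. Qed.
Section RgenSec.
Variables (K : fieldType) (v : K -> int) (Hv : discrete_valuation v).
Variables (H : falgType K) (Hcomm : forall x y : H, x * y = y * x).

Lemma Rgen_mono (x y : H) a b : Rgen v x y (x ^+ a * y ^+ b).
Proof.
exists 1%N, (fun _ => 1), (fun _ => a), (fun _ => b); split => [k|].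
  exact: inR1.
by rewrite big_ord1 scale1r.
Qed.

Lemma Rgen0 (x y : H) : Rgen v x y 0.
Proof.
exists 0%N, (fun _ => 0), (fun _ => 0%N), (fun _ => 0%N); split => [k|].
  exact: inR0.
by rewrite big_ord0.
Qed.

Lemma Rgen_add (x y z w : H) : Rgen v x y z -> Rgen v x y w -> Rgen v x y (z + w).
Proof.
move=> [n [c [a [b [hc ->]]]]] [m [d [e [f [hd ->]]]]].
exists (n + m)%N,
  (fun k => match split k with inl i => c i | inr i => d i end),
  (fun k => match split k with inl i => a i | inr i => e i end),
  (fun k => match split k with inl i => b i | inr i => f i end); split.
  by move=> k; case: split.
rewrite big_split_ord /=; congr (_ + _); apply: eq_bigr => i _.
  by rewrite -[lshift _ _]/(unsplit (inl _ i)) unsplitK.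
by rewrite -[rshift _ _]/(unsplit (inr _ i)) unsplitK.
Qed.

Lemma Rgen_scale (x y z : H) r : inR v r -> Rgen v x y z -> Rgen v x y (r *: z).
Proof.
move=> hr [n [c [a [b [hc ->]]]]].
exists n, (fun k => r * c k), a, b; split.
  by move=> k; apply: inR_mul.
rewrite scaler_sumr; apply: eq_bigr => i _; by rewrite scalerA.
Qed.

Lemma Rgen_sum (x y : H) n (F : 'I_n -> H) :
  (forall k, Rgen v x y (F k)) -> Rgen v x y (\sum_(k < n) F k).
Proof.
elim: n F => [|n IH] F hF; first by rewrite big_ord0; exact: Rgen0.
rewrite big_ord_recr /=; apply: Rgen_add; last exact: hF.
exact: IH.
Qed.

Lemma Rgen_mulmono (x y z : H) a b : Rgen v x y z -> Rgen v x y (z * (x ^+ a * y ^+ b)).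
Proof.
move=> [n [c [a' [b' [hc ->]]]]].
rewrite mulr_suml; apply: Rgen_sum => k; rewrite -scalerAl.
apply: Rgen_scale => //.
have -> : x ^+ a' k * y ^+ b' k * (x ^+ a * y ^+ b) =
          x ^+ (a' k + a) * y ^+ (b' k + b).
  rewrite !exprD -!mulrA; congr (_ * _).
  by rewrite mulrA [y ^+ b' k * x ^+ a]Hcomm -mulrA.
exact: Rgen_mono.
Qed.

Lemma Rgen_mul (x y z w : H) : Rgen v x y z -> Rgen v x y w -> Rgen v x y (z * w).
Proof.
move=> hz [m [d [e [f [hd ->]]]]].
rewrite mulr_sumr; apply: Rgen_sum => k; rewrite -scalerAr.
by apply: Rgen_scale => //; apply: Rgen_mulmono.
Qed.

Lemma Rgen_exp (x y z : H) n : Rgen v x y z -> Rgen v x y (z ^+ n).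
Proof.
move=> hz; elim: n => [|n IH].
  by rewrite expr0 -[1](mulr1) -{1}(expr0 x) -(expr0 y); apply: Rgen_mono.
by rewrite exprS; apply: Rgen_mul.
Qed.

Lemma Rgen_sub (x y x' y' z : H) : Rgen v x y x' -> Rgen v x y y' ->
  Rgen v x' y' z -> Rgen v x y z.
Proof.
move=> hx hy [n [c [a [b [hc ->]]]]].
apply: Rgen_sum => k; apply: Rgen_scale => //.
by apply: Rgen_mul; apply: Rgen_exp.
Qed.

End RgenSec.
Lemma sum_delta (K : fieldType) (V : lmodType K) n (i0 : 'I_n) (F : 'I_n -> V) :
  \sum_(k < n) (k == i0)%:R *: F k = F i0.
Proof.
rewrite (bigD1 i0) //= eqxx scale1r big1 ?addr0 // => k /negbTE ->.
by rewrite scale0r.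
Qed.

Section RSSec.
Variables (K : fieldType) (v : K -> int) (Hv : discrete_valuation v).
Variables (H : falgType K) (Hcomm : forall x y : H, x * y = y * x).
Variables (p : nat) (p2 : (1 < p)%N) (x y : H) (a00 a10 a01 a11 : K).
Hypotheses (h00 : inR v a00) (h10 : inR v a10) (h01 : inR v a01) (h11 : inR v a11).
Hypotheses (hx : x ^+ p = a00 *: x + a10 *: y) (hy : y ^+ p = a01 *: x + a11 *: y).

Definition Sq := [seq x ^+ (k %/ p) * y ^+ (k %% p) | k <- iota 0 (p * p)].

Lemma size_Sq : size Sq = (p * p)%N.
Proof. by rewrite size_map size_iota. Qed.

Lemma nth_Sq k : (k < p * p)%N -> Sq`_k = x ^+ (k %/ p) * y ^+ (k %% p).
Proof.
move=> hk; rewrite (nth_map 0%N) ?size_iota // nth_iota //.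
Qed.

Definition RS (z : H) := exists d : 'I_(size Sq) -> K,
  (forall k, inR v (d k)) /\ z = \sum_(k < size Sq) d k *: Sq`_k.

Lemma RS0 : RS 0.
Proof.
exists (fun _ => 0); split => [k|]; first exact: inR0.
by rewrite big1 // => k _; rewrite scale0r.
Qed.

Lemma RS_add z w : RS z -> RS w -> RS (z + w).
Proof.
move=> [d [hd ->]] [e [he ->]]; exists (fun k => d k + e k); split.
  move=> k; move: (hd k) (he k); rewrite /inR /vge.
  case: (eqVneq (d k) 0) => [->|d0]; first by rewrite add0r => _ h.
  case: (eqVneq (e k) 0) => [->|e0]; first by rewrite addr0 /= => h _; rewrite h orbT.
  case: (eqVneq (d k + e k) 0) => [->|de0] //= h1 h2.
  case: Hv => _ Ha _; apply: le_trans (Ha _ _ d0 e0 de0).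
  by rewrite le_min h1 h2.
by rewrite -big_split /=; apply: eq_bigr => k _; rewrite scalerDl.
Qed.

Lemma RS_scale r z : inR v r -> RS z -> RS (r *: z).
Proof.
move=> hr [d [hd ->]]; exists (fun k => r * d k); split.
  by move=> k; apply: inR_mul.
by rewrite scaler_sumr; apply: eq_bigr => k _; rewrite scalerA.
Qed.

Lemma RS_sum n (F : 'I_n -> H) : (forall k, RS (F k)) -> RS (\sum_(k < n) F k).
Proof.
elim: n F => [|n IH] F hF; first by rewrite big_ord0; exact: RS0.
by rewrite big_ord_recr /=; apply: RS_add; [apply: IH | apply: hF].
Qed.

Lemma RS_m a b : (a < p)%N -> (b < p)%N -> RS (x ^+ a * y ^+ b).
Proof.
move=> ha hb.
have hk : (a * p + b < size Sq)%N.
  rewrite size_Sq; apply: (@leq_trans (a * p + p)); first by rewrite ltn_add2l.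
  by rewrite addnC -mulSn leq_mul2r ha orbT.
exists (fun k => (k == Ordinal hk)%:R); split.
  by move=> k; case: (_ == _); [exact: inR1 | exact: inR0].
rewrite sum_delta /= nth_Sq -?size_Sq //.
have p0 : (0 < p)%N by apply: ltnW.
by rewrite divnMDl // modnMDl divn_small // addn0 modn_small.
Qed.

Lemma RS_x0 : RS (x ^+ p).
Proof.
rewrite hx; have p0 : (0 < p)%N by apply: ltnW.
apply: RS_add; apply: RS_scale => //.
  by rewrite -[x]mulr1 -(expr0 y) -(expr1 x); apply: RS_m.
by rewrite -[y]mul1r -(expr0 x) -(expr1 y); apply: RS_m.
Qed.

Lemma RS_y0 : RS (y ^+ p).
Proof.
rewrite hy; have p0 : (0 < p)%N by apply: ltnW.
apply: RS_add; apply: RS_scale => //.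
  by rewrite -[x]mulr1 -(expr0 y) -(expr1 x); apply: RS_m.
by rewrite -[y]mul1r -(expr0 x) -(expr1 y); apply: RS_m.
Qed.

Lemma RS_yp a : (a < p)%N -> RS (x ^+ a * y ^+ p).
Proof.
move=> ha; have p0 : (0 < p)%N by apply: ltnW.
rewrite hy mulrDr -!scalerAr; apply: RS_add; apply: RS_scale => //.
  rewrite -exprSr; case: (ltnP a.+1 p) => h.
    by rewrite -[_ ^+ a.+1]mulr1 -(expr0 y); apply: RS_m.
  have -> : a.+1 = p by apply/eqP; rewrite eqn_leq h ha.
  exact: RS_x0.
by rewrite -(expr1 y); apply: RS_m.
Qed.

Lemma RS_xp b : (b < p)%N -> RS (x ^+ p * y ^+ b).
Proof.
move=> hb; have p0 : (0 < p)%N by apply: ltnW.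
rewrite hx mulrDl -!scalerAl; apply: RS_add; apply: RS_scale => //.
  by rewrite -(expr1 x); apply: RS_m.
rewrite -exprS; case: (ltnP b.+1 p) => h.
  by rewrite -[_ ^+ b.+1]mul1r -(expr0 x); apply: RS_m.
have -> : b.+1 = p by apply/eqP; rewrite eqn_leq h hb.
exact: RS_y0.
Qed.

Lemma RS_mulx_m a b : (a < p)%N -> (b < p)%N -> RS (x * (x ^+ a * y ^+ b)).
Proof.
move=> ha hb; rewrite mulrA -exprS; case: (ltnP a.+1 p) => h.
  exact: RS_m.
have -> : a.+1 = p by apply/eqP; rewrite eqn_leq h ha.
exact: RS_xp.
Qed.

Lemma RS_muly_m a b : (a < p)%N -> (b < p)%N -> RS (y * (x ^+ a * y ^+ b)).
Proof.
move=> ha hb; rewrite Hcomm -mulrA -exprSr; case: (ltnP b.+1 p) => h.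
  exact: RS_m.
have -> : b.+1 = p by apply/eqP; rewrite eqn_leq h hb.
exact: RS_yp.
Qed.

Lemma Sq_m k : (k < size Sq)%N -> exists a b, [/\ (a < p)%N, (b < p)%N &
  Sq`_k = x ^+ a * y ^+ b].
Proof.
move=> hk; rewrite size_Sq in hk; have p0 : (0 < p)%N by apply: ltnW.
exists (k %/ p)%N, (k %% p)%N; split; last exact: nth_Sq.
  by rewrite ltn_divLR.
by rewrite ltn_mod.
Qed.

Lemma RS_mulx z : RS z -> RS (x * z).
Proof.
move=> [d [hd ->]]; rewrite mulr_sumr; apply: RS_sum => k.
rewrite -scalerAr; apply: RS_scale => //.
have [a [b [ha hb ->]]] := Sq_m (ltn_ord k); exact: RS_mulx_m.
Qed.

Lemma RS_muly z : RS z -> RS (y * z).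
Proof.
move=> [d [hd ->]]; rewrite mulr_sumr; apply: RS_sum => k.
rewrite -scalerAr; apply: RS_scale => //.
have [a [b [ha hb ->]]] := Sq_m (ltn_ord k); exact: RS_muly_m.
Qed.

Lemma RS_all a b : RS (x ^+ a * y ^+ b).
Proof.
have p0 : (0 < p)%N by apply: ltnW.
elim: a => [|a IH].
  elim: b => [|b IH]; first exact: RS_m.
  by rewrite expr0 mul1r exprS; move: (RS_muly IH); rewrite expr0 mul1r.
by rewrite exprS -mulrA; apply: RS_mulx.
Qed.

Lemma Rgen_RS z : Rgen v x y z -> RS z.
Proof.
move=> [n [c [a [b [hc ->]]]]]; apply: RS_sum => k; apply: RS_scale => //.
exact: RS_all.
Qed.

Lemma RS_span z : RS z -> z \in <<Sq>>%VS.
Proof.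
move=> [d [hd ->]]; apply: memv_suml => k _; apply: memvZ.
by apply: memv_span; apply: mem_nth.
Qed.

Lemma span_mulx z : z \in <<Sq>>%VS -> x * z \in <<Sq>>%VS.
Proof.
move=> /(coord_span (X := in_tuple Sq)) ->.
rewrite mulr_sumr; apply: memv_suml => k _; rewrite -scalerAr; apply: memvZ.
apply: RS_span; have [a [b [ha hb ->]]] := Sq_m (ltn_ord k); exact: RS_mulx_m.
Qed.

Lemma span_muly z : z \in <<Sq>>%VS -> y * z \in <<Sq>>%VS.
Proof.
move=> /(coord_span (X := in_tuple Sq)) ->.
rewrite mulr_sumr; apply: memv_suml => k _; rewrite -scalerAr; apply: memvZ.
apply: RS_span; have [a [b [ha hb ->]]] := Sq_m (ltn_ord k); exact: RS_muly_m.
Qed.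

Lemma span1 : (1 \in <<Sq>>%VS).
Proof.
have p0 : (0 < p)%N by apply: ltnW.
by rewrite -[1]mulr1 -{1}(expr0 x) -(expr0 y); apply: RS_span; apply: RS_m.
Qed.

Lemma key_coef c : (fullv <= <<Sq>>)%VS -> \dim {:H} = (p ^ 2)%N ->
  Rgen v x y (x + c *: y) -> inR v c.
Proof.
move=> hfull hdim /Rgen_RS [d [hd he]].
have hfree : free Sq.
  rewrite /free eqn_leq dim_span /= size_Sq.
  by rewrite mulnn -hdim; apply: dimvS.
have p0 : (0 < p)%N by apply: ltnW.
have hix : (p < size Sq)%N by rewrite size_Sq -{1}(muln1 p) ltn_mul2l p0.
have hiy : (1 < size Sq)%N by apply: leq_trans hix.
pose ix := Ordinal hix; pose iy := Ordinal hiy.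
have Ex : Sq`_ix = x by rewrite nth_Sq -?size_Sq // divnn p0 modnn expr1 expr0 mulr1.
have Ey : Sq`_iy = y by rewrite nth_Sq -?size_Sq // divn_small // modn_small // expr0 expr1 mul1r.
have := elimT (@freeP _ _ _ (in_tuple Sq)) hfree.
move=> /(_ (fun k => d k - (k == ix)%:R - c * (k == iy)%:R)).
have hsum : \sum_(k < size Sq) (d k - (k == ix)%:R - c * (k == iy)%:R) *: (in_tuple Sq)`_k = 0.
  rewrite /=.
  under eq_bigr do rewrite !scalerBl -scalerA.
  rewrite !sumrB -scaler_sumr !sum_delta Ex Ey -he.
  by rewrite [x + _]addrC addrK subrr.
move=> /(_ hsum iy).
have nxy : (iy == ix) = false.
  by apply/eqP => /(congr1 val) /= h; move: p2; rewrite -h ltnn.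
rewrite nxy eqxx subr0 mulr1 => /eqP; rewrite subr_eq0 => /eqP <-.
exact: hd.
Qed.

End RSSec.
Lemma pchar_H (K : fieldType) (H : falgType K) p :
  p \in [pchar K] -> p \in [pchar H].
Proof.
move=> hp; have pr := pcharf_prime hp.
rewrite inE pr /= -scaler_nat (pcharf0 hp) scale0r //.
Qed.

Lemma frob_sum (K : fieldType) (H : falgType K) p
  (Hcomm : forall x y : H, x * y = y * x) (chH : p \in [pchar H]) n (F : 'I_n -> H) :
  (\sum_(l < n) F l) ^+ p = \sum_(l < n) F l ^+ p.
Proof.
elim: n F => [|n IH] F.
  rewrite !big_ord0 -(pFrobenius_autE chH); exact: pFrobenius_aut0.
rewrite !big_ord_recr /= -!(pFrobenius_autE chH) pFrobenius_autD_comm; last exact: Hcomm.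
by rewrite !(pFrobenius_autE chH) IH.
Qed.

Lemma frob_u (K : fieldType) (H : falgType K) p (Hchar : p \in [pchar K])
  (Hcomm : forall x y : H, x * y = y * x) (t : 'I_2 -> H) (B : 'M[K]_2)
  (HB : forall k : 'I_2, t k ^+ p = \sum_(l < 2) B l k *: t l)
  (Th : 'M[K]_2) (hu : Th \in unitmx) (k : 'I_2) :
  (\sum_(l < 2) Th l k *: t l) ^+ p =
  \sum_(n < 2) (invmx Th *m B *m mx_frob p Th) n k *: (\sum_(l < 2) Th l n *: t l).
Proof.
have chH := pchar_H H Hchar.
rewrite frob_sum //.
under eq_bigr do rewrite exprZn HB scaler_sumr.
rewrite exchange_big /=.
under [RHS]eq_bigr do rewrite scaler_sumr.
rewrite [RHS]exchange_big /=.
apply: eq_bigr => m _.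
under eq_bigr do rewrite scalerA.
under [RHS]eq_bigr do rewrite scalerA.
rewrite -!scaler_suml; congr (_ *: _).
have E : Th *m (invmx Th *m B *m mx_frob p Th) = B *m mx_frob p Th.
  by rewrite -mulmxA mulKVmx.
have := congr1 (fun M : 'M[K]_2 => M m k) E; rewrite /mx_frob !mxE /= => h.
symmetry; etransitivity; [|etransitivity; [exact: h|]].
  by apply: eq_bigr => l _; rewrite mulrC.
by apply: eq_bigr => l _; rewrite mxE mulrC.
Qed.
Lemma sum2 (V : nmodType) (F : 'I_2 -> V) : \sum_(i < 2) F i = F 0 + F 1.
Proof. by rewrite big_ord_recr big_ord1 /=; congr (F _ + F _); apply/val_inj. Qed.
Lemma prod2 (R : comNzRingType) (F : 'I_2 -> R) : \prod_(i < 2) F i = F 0 * F 1.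
Proof. by rewrite big_ord_recr big_ord1 /=; congr (F _ * F _); apply/val_inj. Qed.

Lemma Theta_E (K : fieldType) (pi : K) i j theta :
  [/\ Theta_mx pi i j theta 0 0 = pi ^ i, Theta_mx pi i j theta 1 0 = theta,
      Theta_mx pi i j theta 0 1 = 0 & Theta_mx pi i j theta 1 1 = pi ^ j].
Proof. by split; rewrite mxE. Qed.

Lemma Theta_unit (K : fieldType) (pi : K) i j theta :
  pi != 0 -> Theta_mx pi i j theta \in unitmx.
Proof.
move=> p0; have [E00 E10 E01 E11] := Theta_E pi i j theta.
rewrite unitmxE det_trig.
  by rewrite prod2 E00 E11 unitfE mulf_neq0 // expfz_neq0.
apply/is_trig_mxP => a b.
case: a => [[|[|a]] ha] //; case: b => [[|[|b]] hb] //= _.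
by rewrite mxE.
Qed.

Lemma vge_inR (K : fieldType) (v : K -> int) (pi : K) (j : int) (d : K) :
  discrete_valuation v -> pi != 0 -> v pi = 1 ->
  vge v d j = inR v (d / pi ^ j).
Proof.
move=> Hv p0 vp; rewrite /inR /vge.
case: (eqVneq d 0) => [->|d0]; first by rewrite mul0r eqxx.
have pj : pi ^ j != 0 by rewrite expfz_neq0.
have := Hv; case=> Hm _ _.
rewrite /= mulf_eq0 (negbTE d0) invr_eq0 (negbTE pj) /=.
rewrite Hm ?invr_eq0 // (vV Hv pj) (vexpz _ Hv p0 vp).
by rewrite subr_ge0.
Qed.

Lemma vgeN (K : fieldType) (v : K -> int) (d : K) (j : int) :
  discrete_valuation v -> vge v (- d) j = vge v d j.
Proof.
move=> Hv; rewrite /vge oppr_eq0; case: (eqVneq d 0) => // d0.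
by rewrite (vN Hv d0).
Qed.

Lemma x_shift (K : fieldType) (H : falgType K) (pi : K) (i j : int) (th th' : K)
  (t : 'I_2 -> H) : pi != 0 ->
  pi ^ i *: t 0 + th *: t 1 =
  (pi ^ i *: t 0 + th' *: t 1) + ((th - th') / pi ^ j) *: (pi ^ j *: t 1).
Proof.
move=> p0; rewrite scalerA divfK ?expfz_neq0 // -addrA -scalerDl.
by rewrite [th' + _]addrC subrK.
Qed.

Lemma Rgen_x (K : fieldType) (v : K -> int) (Hv : discrete_valuation v)
  (H : falgType K) (x y : H) : Rgen v x y x.
Proof. by have := Rgen_mono Hv x y 1 0; rewrite expr1 expr0 mulr1. Qed.
Lemma Rgen_y (K : fieldType) (v : K -> int) (Hv : discrete_valuation v)
  (H : falgType K) (x y : H) : Rgen v x y y.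
Proof. by have := Rgen_mono Hv x y 0 1; rewrite expr1 expr0 mul1r. Qed.

Lemma transfer (K : fieldType) (v : K -> int) (Hv : discrete_valuation v)
  (pi : K) (p0 : pi != 0) (vp : v pi = 1)
  (H : falgType K) (Hcomm : forall x y : H, x * y = y * x)
  (t : 'I_2 -> H) (i j : int) (th th' : K) :
  vge v (th - th') j -> forall z, H_ijtheta v t pi i j th z -> H_ijtheta v t pi i j th' z.
Proof.
move=> hv z; rewrite /H_ijtheta => hz; apply: (Rgen_sub Hv Hcomm _ _ hz); last first.
  exact: Rgen_y.
rewrite (x_shift i j th th' t p0); apply: Rgen_add.
  exact: Rgen_x.
apply: (Rgen_scale Hv); first by rewrite -(vge_inR j (th - th') Hv p0 vp).
exact: Rgen_y.
Qed.
Unset Implicit Arguments.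

Theorem corollary6p5
  (p : nat) (K : fieldType) (v : K -> int)
  (Hv : discrete_valuation v) (Hcompl : v_complete v)
  (Hchar : p \in [pchar K])
  (pi : K) (Hpi0 : pi != 0) (Hpi : v pi = 1)
  (H : falgType K) (Hcomm : forall x y : H, x * y = y * x)
  (T : falgType K) (i1 i2 Delta : 'AHom(H, T))
  (Hten : is_tensor_square i1 i2)
  (t : 'I_2 -> H)
  (Htprim : forall k, primitive i1 i2 Delta (t k))
  (Htfree : free [:: t 0; t 1])
  (HPrim : forall x : H, primitive i1 i2 Delta x -> x \in <<[:: t 0%R; t 1%R]>>%VS)
  (Hgen : agenv <<[:: t 0%R; t 1%R]>>%VS = fullv)
  (Hrank : \dim {:H} = (p ^ 2)%N)
  (B : 'M[K]_2) (HB : forall k : 'I_2, t k ^+ p = \sum_(l < 2) B l k *: t l)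
  (i j : int) (theta : K) (Htheta : vle v theta j)
  (HTh : mx_inR v (invmx (Theta_mx pi i j theta) *m B
                    *m mx_frob p (Theta_mx pi i j theta))) :
  (forall z : H, hopf_order_of v t (Theta_mx pi i j theta) z
                 <-> H_ijtheta v t pi i j theta z)
  /\
  (forall theta' : K, vle v theta' j ->
     mx_inR v (invmx (Theta_mx pi i j theta') *m B
               *m mx_frob p (Theta_mx pi i j theta')) ->
     ((forall z : H, H_ijtheta v t pi i j theta z <-> H_ijtheta v t pi i j theta' z)
      <-> vge v (theta - theta') j)).
Proof.
have [E00 E10 E01 E11] := Theta_E pi i j theta.
set Th := Theta_mx pi i j theta in HTh E00 E10 E01 E11 *.
set x := pi ^ i *: t 0 + theta *: t 1.
set y := pi ^ j *: t 1.
have G0 : \sum_(l < 2) Th l 0 *: t l = x by rewrite sum2 E00 E10.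
have G1 : \sum_(l < 2) Th l 1 *: t l = y by rewrite sum2 E01 E11 scale0r add0r.
split.
  by move=> z; rewrite /hopf_order_of /H_ijtheta G0 G1.
move=> theta' _ _.
have p2 : (1 < p)%N := prime_gt1 (pcharf_prime Hchar).
have hu := Theta_unit i j theta Hpi0.
set M := invmx Th *m B *m mx_frob p Th in HTh.
have hx : x ^+ p = M 0 0 *: x + M 1 0 *: y.
  by rewrite -G0 (frob_u Hchar Hcomm HB hu) sum2 G0 G1.
have hy : y ^+ p = M 0 1 *: x + M 1 1 *: y.
  by rewrite -G1 (frob_u Hchar Hcomm HB hu) sum2 G0 G1.
have pj : pi ^ j != 0 by rewrite expfz_neq0.
have pii : pi ^ i != 0 by rewrite expfz_neq0.
have Et1 : t 1 = (pi ^ j)^-1 *: y by rewrite /y scalerA mulVf // scale1r.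
have Et0 : t 0 = (pi ^ i)^-1 *: (x - theta *: t 1).
  by rewrite /x addrK scalerA mulVf // scale1r.
have hfull : (fullv <= <<Sq p x y>>)%VS.
  rewrite -Hgen; apply: agenv_sub_modl.
    by rewrite -memvE (span1 Hv p2 x y).
  apply/prodvP => u w hu' hw.
  have hyw : y * w \in <<Sq p x y>>%VS.
    exact: (span_muly Hv Hcomm p2 (HTh 0 0) (HTh 1 0) (HTh 0 1) (HTh 1 1) hx hy).
  have hxw : x * w \in <<Sq p x y>>%VS.
    exact: (span_mulx Hv p2 (HTh 0 0) (HTh 1 0) (HTh 0 1) (HTh 1 1) hx hy).
  have h1w : t 1 * w \in <<Sq p x y>>%VS.
    by rewrite Et1 -scalerAl memvZ.
  have h0w : t 0 * w \in <<Sq p x y>>%VS.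
    by rewrite Et0 -scalerAl memvZ // mulrBl -scalerAl memvB // memvZ.
  move: hu'; rewrite span_cons span_seq1 => /memv_addP [u0 hu0 [u1 hu1 ->]].
  move: hu0 hu1 => /vlineP [k0 ->] /vlineP [k1 ->].
  by rewrite mulrDl -!scalerAl memvD // memvZ.
split.
  move=> heq.
  have hx' : Rgen v x y (pi ^ i *: t 0 + theta' *: t 1).
    by apply/heq; exact: Rgen_x.
  rewrite (x_shift i j theta' theta t Hpi0) in hx'.
  have := key_coef Hv Hcomm p2 (HTh 0 0) (HTh 1 0) (HTh 0 1) (HTh 1 1) hx hy hfull Hrank hx'.
  by rewrite -(vge_inR j (theta' - theta) Hv Hpi0 Hpi) -opprB (vgeN _ _ Hv).
move=> hv z; split; apply: (transfer Hv Hpi0 Hpi Hcomm) => //.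
by rewrite -opprB (vgeN _ _ Hv).
Qed.
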